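(* Let $q=(q_1,\ldots,q_n)$ be a sequence of positive integers, set $Q:=1+q_1+\cdots+q_n$, and define \[ T_q:=\{\,b\in\{1,\ldots,Q-1\} \;:\; Q\nmid q_i b \text{ for all } i\in\{1,\ldots,n\}\,\}. \] Then the local $h^\ast$-polynomial of the $n$-simplex $\Delta_{(1,q)}$ is \[ \ell^\ast(\Delta_{(1,q)};z)=\sum_{b\in T_q} z^{\omega(b)},\qquad \text{where}\quad \omega(b)=b-\sum_{i=1}^n\left\lfloor \frac{q_i b}{Q}\right\rfloor . \]
   Context: Let $e^{(1)},\ldots,e^{(n)}$ be the standard basis of $\mathbb{R}^n$. For a vector $q=(q_1,\ldots,q_n)$ of positive integers, $\Delta_{(1,q)}:=\operatorname{conv}\bigl(e^{(1)},\ldots,e^{(n)},-\sum_{i=1}^n q_ie^{(i)}\bigr)\subset\mathbb{R}^n$; it is a lattice $n$-simplex. For a lattice $d$-simplex $\Delta=\operatorname{conv}(v^{(0)},\ldots,v^{(d)})\subset\mathbb{R}^n$, its open parallelepiped is $\Pi^\circ_\Delta:=\{\sum_{i=0}^d\lambda_i(v^{(i)},1)\in\mathbb{R}^{n+1} : 0<\lambda_i<1 \text{ for all } i\}$, and its local $h^\ast$-polynomial (box polynomial) is $\ell^\ast(\Delta;z):=\sum_{x=(x_1,\ldots,x_{n+1})\in\Pi^\circ_\Delta\cap\mathbb{Z}^{n+1}} z^{x_{n+1}}$. *)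

(* Defs.v *)
From HB Require Import structures.
From mathcomp Require Import all_boot all_order all_algebra.
Set Implicit Arguments. Unset Strict Implicit. Unset Printing Implicit Defensive.
Import Order.TTheory GRing.Theory Num.Theory.
Local Open Scope ring_scope.

(* q = (q_1,...,q_n) is represented as a list q of length n; q_i = nth 0 q (i-1)
   (0-based indices below).  Vertices of Delta_(1,q), indexed j = 0..n:
   v^(j) = e^(j) for j < n, and v^(n) = - sum_i q_i e^(i).
   liftv q j i is the i-th coordinate (i = 0..n) of the lifted vertex (v^(j),1). *)
Definition liftv (q : seq nat) (j i : nat) : int :=
  if i == size q then 1
  else if j == size q then - ((nth 0%N q i)%:Z)
  else ((i == j) : nat)%:Z.

Definition in_open_par (R : realFieldType) (q : seq nat)
  (x : 'rV[int]_(size q).+1) : Prop :=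
  exists lam : 'I_(size q).+1 -> R,
    (forall j, 0 < lam j < 1) /\
    (forall i : 'I_(size q).+1,
        (x ord0 i)%:~R = \sum_(j < (size q).+1) lam j * (liftv q j i)%:~R).

Definition bigQ (q : seq nat) : nat := (1 + sumn q)%N.

Definition Tq (q : seq nat) : seq nat :=
  [seq b <- iota 1 (bigQ q).-1 | all (fun a => ~~ (bigQ q %| a * b)%N) q].

Definition omega (q : seq nat) (b : nat) : int :=
  b%:Z - (\sum_(i < size q) ((nth 0%N q i * b) %/ bigQ q)%N%:Z).

Arguments in_open_par R q x : clear implicits.

(* Main.v *)
Require Import Defs.
From HB Require Import structures.
From mathcomp Require Import all_boot all_order all_algebra.
From mathcomp Require Import zify ring lra.
Import Order.TTheory GRing.Theory Num.Theory.
Local Open Scope ring_scope.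

Lemma key (Q a : nat) (m x : int) : 0 < m -> m < Q%:Z -> (Q%:Z * x + a%:Z = m) ->
  x = - (a %/ Q)%N%:Z /\ ~~ (Q %| a)%N.
Proof.
move=> h1 h2 h. have hQ : (0 < Q)%N by lia.
have e := divn_eq a Q. have hr := ltn_pmod a hQ.
rewrite /dvdn.
move: e h hr. set d := (a %/ Q)%N. set r := (a %% Q)%N. move=> e h hr.
have hy : Q%:Z * (x + d%:Z) = m - r%:Z by rewrite e in h; lia.
have : x + d%:Z = 0.
  case: (ltrgtP (x + d%:Z) 0) => // hc.
  - have : Q%:Z * (x + d%:Z) <= - Q%:Z. have : x + d%:Z <= -1 by lia. nia. lia.
  - have : Q%:Z * (x + d%:Z) >= Q%:Z. have : x + d%:Z >= 1 by lia. nia. lia.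
move=> h0. rewrite h0 mulr0 in hy. split; lia.
Qed.

Definition fl (q : seq nat) (i b : nat) : nat := ((nth 0%N q i * b) %/ bigQ q)%N.

Definition fvec (q : seq nat) (b : nat) : 'rV[int]_(size q).+1 :=
  \row_(i < (size q).+1) if (i == size q :> nat) then omega q b else - (fl q i b)%:Z.

Definition gvec (q : seq nat) (x : 'rV[int]_(size q).+1) : int :=
  x ord0 ord_max - \sum_(i < size q) x ord0 (widen_ord (leqnSn _) i).

Lemma gf q b : gvec q (fvec q b) = b%:Z.
Proof.
rewrite /gvec mxE /= eqxx.
under eq_bigr do rewrite mxE /= (ltn_eqF (ltn_ord _)).
by rewrite sumrN opprK /omega subrK.
Qed.

Lemma sumlift (R : realFieldType) q (lam : 'I_(size q).+1 -> R) (i : 'I_(size q).+1) :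
  \sum_j lam j * (liftv q j i)%:~R =
  if (i == size q :> nat) then \sum_j lam j
  else lam i - (nth 0%N q i)%:R * lam ord_max.
Proof.
rewrite /liftv. case: eqP => hi.
  by apply: eq_bigr => j _; rewrite mulr1.
rewrite big_ord_recr /= eqxx.
have hi' : (i < size q)%N by have := ltn_ord i; rewrite ltnS leq_eqVlt => /orP[/eqP|].
rewrite (bigD1 (Ordinal hi')) //= (ltn_eqF hi') eqxx mulr1.
rewrite big1 ?addr0; last first.
  move=> j hj. rewrite (ltn_eqF (ltn_ord j)).
  have -> : (nat_of_ord i == nat_of_ord j) = false.
    apply/negbTE; apply: contra hj => /eqP h; apply/eqP/val_inj => /=; by rewrite h.
  by rewrite mulr0.
have -> : widen_ord (leqnSn (size q)) (Ordinal hi') = i by apply: val_inj.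
by rewrite intrN mulrN mulrC.
Qed.

Lemma natid q b : (bigQ q * b = b + \sum_(j < size q) ((nth 0%N q j * b) %% bigQ q)
   + (\sum_(j < size q) fl q j b) * bigQ q)%N.
Proof.
have e : (\sum_(j < size q) nth 0%N q j * b = \sum_(j < size q) (fl q j b * bigQ q + (nth 0%N q j * b) %% bigQ q))%N.
  by apply: eq_bigr => j _; rewrite /fl -divn_eq.
rewrite big_split /= -big_distrl /= -big_distrl /= in e.
have s : sumn q = (\sum_(j < size q) nth 0%N q j)%N by rewrite sumnE (big_nth 0%N) big_mkord.
rewrite /bigQ -s in e *. rewrite mulnDl mul1n e. ring.
Qed.

Lemma frac_ok (R : realFieldType) (Q x : nat) : (0 < x)%N -> (x < Q)%N ->
  0 < (x%:R / Q%:R : R) < 1.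
Proof.
move=> h1 h2. have hQ : (0:R) < Q%:R by rewrite ltr0n; lia.
apply/andP; split; first by apply: divr_gt0 => //; rewrite ltr0n.
by rewrite ltr_pdivrMr // mul1r ltr_nat.
Qed.

Theorem theorem2p1 (R : realFieldType) (q : seq nat)
  (hq : all (fun a => (0 < a)%N) q) :
  exists s : seq 'rV[int]_(size q).+1,
    [/\ uniq s,
        (forall x, x \in s <-> in_open_par R q x) &
        (forall z : R, z != 0 ->
           \sum_(x <- s) z ^ (x ord0 ord_max) = \sum_(b <- Tq q) z ^ omega q b)].
Proof.
have Qpos : (0 < bigQ q)%N by rewrite /bigQ.
have hQR : (0:R) < (bigQ q)%:R by rewrite ltr0n.
have hQ0 : ((bigQ q)%:R : R) != 0 by rewrite gt_eqF.
exists (map (fvec q) (Tq q)). split.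
- rewrite map_inj_in_uniq; first by rewrite filter_uniq // iota_uniq.
  move=> b1 b2 _ _ e. have := congr1 (gvec q) e. by rewrite !gf; case.
- move=> x; split.
  + case/mapP => b hb ->.
    rewrite mem_filter mem_iota in hb. case/andP: hb => /allP hall /andP[hb1 hb2].
    have hbQ : (b < bigQ q)%N by lia.
    exists (fun j : 'I_(size q).+1 => if (j == size q :> nat) then b%:R / (bigQ q)%:R
             else ((nth 0%N q j * b) %% bigQ q)%N%:R / (bigQ q)%:R).
    split.
    * move=> j. case: eqP => hj; first exact: frac_ok.
      have hj' : (j < size q)%N by have := ltn_ord j; rewrite ltnS leq_eqVlt => /orP[/eqP|].
      apply: frac_ok; last exact: ltn_pmod.
      rewrite lt0n. have := hall _ (mem_nth 0%N hj'). by [].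
    * move=> i. rewrite sumlift mxE. case: eqP => hi.
      - rewrite big_ord_recr /= eqxx.
        under eq_bigr do rewrite (ltn_eqF (ltn_ord _)).
        rewrite -mulr_suml -natr_sum /omega.
        have E : \sum_(i < size q) ((nth 0%N q i * b) %/ bigQ q)%N%:Z
                 = (\sum_(i < size q) fl q i b)%N%:Z.
          by rewrite -natz natr_sum; apply: eq_bigr => j _; rewrite natz.
        rewrite E intrB /=.
        have N := natid q b.
        have NR : ((bigQ q * b)%N%:R : R) = (b + \sum_(j < size q) ((nth 0%N q j * b) %% bigQ q)
           + (\sum_(j < size q) fl q j b) * bigQ q)%N%:R by rewrite N.
        rewrite natrM !natrD natrM in NR.
        have cb : forall k : nat, ((k%:Z)%:~R : R) = k%:R by [].
        rewrite !cb.
        apply: (mulIf hQ0). rewrite [RHS]mulrDl !divfK //. have hQe : ((bigQ q)%:R : R) = 1 + (sumn q)%:R by rewrite /bigQ natrD. rewrite hQe in NR *. nra.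
      - idtac.
        have -> : (nat_of_ord (@ord_max (size q)) == size q) = true by apply/eqP.
        rewrite intrN /= /fl mulrA -natrM.
        set a := (nth 0%N q i * b)%N. set Qn := bigQ q.
        have -> : (a%:R : R) = (a %/ Qn)%:R * Qn%:R + (a %% Qn)%:R
          by rewrite -natrM -natrD -divn_eq.
        rewrite (_ : ((a %/ Qn)%N%:Z)%:~R = (a %/ Qn)%:R :> R) //.
        field. exact: hQ0.
  + case=> lam [hl he]. apply/mapP.
    set n := size q in lam hl he *.
    set t := lam ord_max.
    pose xw (i : 'I_n) := x ord0 (widen_ord (leqnSn n) i).
    have hxi : forall i : 'I_n, (xw i)%:~R = lam (widen_ord (leqnSn n) i) - (nth 0%N q i)%:R * t.
      move=> i. by rewrite /xw he sumlift /= (ltn_eqF (ltn_ord i)).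
    have hxn : (x ord0 ord_max)%:~R = \sum_(i < n) lam (widen_ord (leqnSn n) i) + t.
      by rewrite he sumlift /= eqxx big_ord_recr.
    have hbz : (x ord0 ord_max - \sum_i xw i)%:~R = (bigQ q)%:R * t.
      have Ssum : ((\sum_i xw i)%:~R : R) = \sum_(i < n) (lam (widen_ord (leqnSn n) i) - (nth 0%N q i)%:R * t).
        by rewrite rmorph_sum; apply: eq_bigr => i _; exact: hxi.
      rewrite intrB Ssum hxn.
      rewrite sumrB -mulr_suml -natr_sum /bigQ natrD.
      have -> : sumn q = (\sum_(j < n) nth 0%N q j)%N by rewrite sumnE (big_nth 0%N) big_mkord.
      ring.
    have ht := hl ord_max. rewrite -/t in ht. case/andP: ht => ht0 ht1.
    have hp : 0 < x ord0 ord_max - \sum_i xw i.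
      by rewrite -(ltr0z R) hbz mulr_gt0.
    have hu : x ord0 ord_max - \sum_i xw i < (bigQ q)%:Z.
      by rewrite -(ltr_int R) hbz (_ : ((bigQ q)%:Z)%:~R = (bigQ q)%:R :> R) // -[X in _ < X]mulr1 ltr_pM2l.
    move: hbz hp hu. case E: (x ord0 ord_max - \sum_i xw i) => [b|k] hbz hp hu; last by [].
    have hkey : forall i : 'I_n, xw i = - (fl q i b)%:Z /\ ~~ (bigQ q %| nth 0%N q i * b)%N.
      move=> i. have hli := hl (widen_ord (leqnSn n) i). case/andP: hli => hl0 hl1.
      have hm : ((bigQ q)%:Z * xw i + (nth 0%N q i * b)%N%:Z)%:~R
                = (bigQ q)%:R * lam (widen_ord (leqnSn n) i) :> R.
        rewrite intrD intrM hxi (_ : ((bigQ q)%:Z)%:~R = (bigQ q)%:R :> R) //.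
        rewrite (_ : ((nth 0%N q i * b)%N%:Z)%:~R = (nth 0%N q i)%:R * b%:R :> R); last by rewrite -natrM.
        have -> : (b%:R : R) = (bigQ q)%:R * t by rewrite -hbz.
        ring.
      apply: (@key (bigQ q) (nth 0%N q i * b) ((bigQ q)%:Z * xw i + (nth 0%N q i * b)%N%:Z)).
      * by rewrite -(ltr0z R) hm mulr_gt0.
      * by rewrite -(ltr_int R) hm (_ : ((bigQ q)%:Z)%:~R = (bigQ q)%:R :> R) // -[X in _ < X]mulr1 ltr_pM2l.
      * by [].
    exists b.
    * rewrite mem_filter mem_iota. apply/andP; split.
        apply/allP => a /(nthP 0%N) [j hj <-]. exact: (hkey (Ordinal hj)).2.
      apply/andP; split; lia.
    * apply/rowP => i. case: (eqVneq (nat_of_ord i) n) => hi.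
      - have -> : i = ord_max by apply: val_inj.
        rewrite mxE /= eqxx /omega.
        have S : \sum_i xw i = - \sum_(i < n) ((nth 0%N q i * b) %/ bigQ q)%N%:Z.
          rewrite -sumrN; apply: eq_bigr => j _; exact: (hkey j).1.
        rewrite S opprK in E. by rewrite -E addrK.
      - have hi' : (i < n)%N by rewrite ltn_neqAle hi -ltnS ltn_ord.
        have -> : i = widen_ord (leqnSn n) (Ordinal hi') by apply: val_inj.
        rewrite mxE /= (ltn_eqF hi').
        exact: (hkey (Ordinal hi')).1.
- move=> z _. rewrite big_map. apply: eq_bigr => b _. by rewrite mxE /= eqxx.
Qed.
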